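(* Consider a single context with design set $\mathcal D=\mathcal P\sqcup\mathcal U$. Each design $d$ is Gaussian with mean $\mu^*_d$ and known variance $(\sigma^*_d)^2>0$, all means are distinct, and every mean in $\mathcal P$ exceeds every mean in $\mathcal U$. For $d\in\mathcal P$, $d'\in\mathcal U$ let $$G_{d,d'}(x,y)=\frac{(\mu^*_d-\mu^*_{d'})^2}{(\sigma^*_d)^2/x+(\sigma^*_{d'})^2/y}.$$ Consider the problem of maximizing $\min_{d\in\mathcal P,\,d'\in\mathcal U}G_{d,d'}(\psi(d),\psi(d'))$ over $\psi\ge0$ with $\sum_{d\in\mathcal D}\psi(d)=1$. A feasible $\psi$ is optimal only if there exist $z>0$ and a type $\vartheta\in\{0,1\}^{\mathcal P\times\mathcal U}$ with the following properties: - $\max_{\tilde d\in\mathcal P}\vartheta(\tilde d,d')=1$ for all $d'\in\mathcal U$, and $\max_{\tilde d'\in\mathcal U}\vartheta(d,\tilde d')=1$ for all $d\in\mathcal P$; - for each equivalence class $\mathcal D^l$ ($l=1,\dots,L$) of $\overset{\vartheta}{\sim}$, with $\mathcal P^l=\mathcal D^l\cap\mathcal P$ and $\mathcal U^l=\mathcal D^l\cap\mathcal U$, $$\sum_{d\in\mathcal P^l}\Big(\frac{\psi(d)}{\sigma^*_d}\Big)^2=\sum_{d'\in\mathcal U^l}\Big(\frac{\psi(d')}{\sigma^*_{d'}}\Big)^2;$$ - for all $d\in\mathcal P$, $d'\in\mathcal U$ we have $G_{d,d'}(\psi(d),\psi(d'))\ge z$, with equality if and only if $\vartheta(d,d')=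1$.
   Context: Equivalence relation. Given $\vartheta\in\{0,1\}^{\mathcal P\times\mathcal U}$, the relation $\overset{\vartheta}{\sim}$ on $\mathcal D$ is defined by $\tilde d\overset{\vartheta}{\sim}\bar d$ if there is a chain $(d_1,d_1'),\dots,(d_n,d_n')\in\mathcal P\times\mathcal U$ such that: - $\vartheta(d_i,d_i')=1$ for all $i$; - for each $i<n$, either $d_i=d_{i+1}$ or $d_i'=d_{i+1}'$; - $\tilde d\in\{d_1,d_1'\}$ and $\bar d\in\{d_n,d_n'\}$. This relation partitions $\mathcal D$ into equivalence classes $\mathcal D^1,\dots,\mathcal D^L$. *)

(* Defs.v *)
From HB Require Import structures.
From mathcomp Require Import all_boot all_order all_algebra.
From mathcomp Require Import boolp reals.
Set Implicit Arguments. Unset Strict Implicit. Unset Printing Implicit Defensive.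
Import Order.TTheory GRing.Theory Num.Theory.
Local Open Scope ring_scope.

(* G_{d,d'}(x,y) = (mu d - mu d')^2 / (sigma_d^2/x + sigma_d'^2/y),
   with the convention sigma^2/0 = +oo, i.e. G = 0 whenever x = 0 or y = 0. *)
Definition Gfun (R : realType) (P U : finType) (mu sigma : P + U -> R)
  (p : P) (u : U) (x y : R) : R :=
  if (0 < x) && (0 < y) then
    (mu (inl p) - mu (inr u)) ^+ 2 /
      (sigma (inl p) ^+ 2 / x + sigma (inr u) ^+ 2 / y)
  else 0.

Definition feasible (R : realType) (P U : finType) (psi : P + U -> R) : Prop :=
  (forall d, 0 <= psi d) /\ \sum_(d : P + U) psi d = 1.

(* min_{p,u} G(phi) <= min_{p,u} G(psi): some pair for phi is below every pair for psi *)
Definition objective_le (R : realType) (P U : finType) (mu sigma : P + U -> R)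
  (phi psi : P + U -> R) : Prop :=
  exists (p : P) (u : U), forall (p' : P) (u' : U),
    Gfun mu sigma p u (phi (inl p)) (phi (inr u))
      <= Gfun mu sigma p' u' (psi (inl p')) (psi (inr u')).

Definition optimal (R : realType) (P U : finType) (mu sigma : P + U -> R)
  (psi : P + U -> R) : Prop :=
  feasible psi /\ forall phi, feasible phi -> objective_le mu sigma phi psi.

Definition chain_step (P U : finType) (a b : P * U) : bool :=
  (a.1 == b.1) || (a.2 == b.2).

Definition in_pair (P U : finType) (d : P + U) (a : P * U) : bool :=
  (d == inl a.1) || (d == inr a.2).

Definition theta_rel (P U : finType) (theta : P -> U -> bool)
  (d1 d2 : P + U) : Prop :=
  exists (a : P * U) (s : seq (P * U)),
    all (fun b => theta b.1 b.2) (a :: s) /\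
    path (@chain_step P U) a s /\
    in_pair d1 a /\ in_pair d2 (last a s).

Definition theta_relb (P U : finType) (theta : P -> U -> bool)
  (d1 d2 : P + U) : bool := `[< theta_rel theta d1 d2 >].

(* Main.v *)
Require Import Defs.
From HB Require Import structures.
From mathcomp Require Import all_boot all_order all_algebra.
From mathcomp Require Import reals.
From mathcomp Require Import boolp ring lra.
Import Order.TTheory GRing.Theory Num.Theory.
Local Open Scope ring_scope.

Lemma per_term (R: realType) (a w x t : R) : 0 < a -> 0 < w -> `|x| <= t -> t <= w/2 ->
  a/(w+x) <= a/w - x * (a/w^+2) + t^+2 * (2*a/w^+3).
Proof. move=> ha hw hx ht.
have [hx1 hx1'] : - t <= x /\ x <= t by move: hx; rewrite ler_norml => /andP[].
have hwx : w / 2 <= w + x by lra.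
have hwx0 : 0 < w + x by lra.
have -> : a/(w+x) = a/w - x * (a/w^+2) + a * x^+2 / (w^+2 * (w+x)).
  by field; rewrite !gt_eqF.
rewrite lerD2l.
have hx2 : x^+2 <= t^+2 by nra.
have -> : t ^+ 2 * (2 * a / w ^+ 3) = (a * t^+2) / (w^+2 * (w/2)).
  by field; rewrite gt_eqF.
have hw2 : 0 < w^+2 by rewrite exprn_gt0.
apply: (ler_pM _ _ _ _).
by apply: mulr_ge0; [exact: ltW | exact: sqr_ge0].
by rewrite invr_ge0; apply: mulr_ge0; apply: ltW.
by rewrite ler_pM2l.
have h5 : 0 < w / 2 by lra.
rewrite lef_pV2 ?posrE ?(mulr_gt0 hw2 h5) ?(mulr_gt0 hw2 hwx0) //.
by rewrite ler_pM2l.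
Qed.

Lemma exists_small (R : realType) (I : finType) (f : I -> R) :
  (forall i, 0 < f i) -> exists2 t, 0 < t & forall i, t <= f i.
Proof.
move=> hf.
suff [t ht0 ht] : exists2 t : R, 0 < t & forall i, i \in enum I -> t <= f i.
  by exists t => // i; apply: ht; rewrite mem_enum.
elim: (enum I) => [|j s [t ht0 ht]]; first by exists 1.
exists (Num.min t (f j)); first by rewrite lt_min ht0 hf.
move=> i; rewrite inE => /orP[/eqP ->|his]; rewrite ge_min ?lexx ?orbT //.
by rewrite ht.
Qed.

Lemma GfunE (R : realType) (P U : finType) (mu sigma : P + U -> R) p u x y :
  0 < x -> 0 < y -> Gfun mu sigma p u x y =
  (mu (inl p) - mu (inr u)) ^+ 2 / (sigma (inl p) ^+ 2 / x + sigma (inr u) ^+ 2 / y).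
Proof. by move=> hx hy; rewrite /Gfun hx hy. Qed.

Lemma Gfun0 (R : realType) (P U : finType) (mu sigma : P + U -> R) p u x y :
  ~~ ((0 < x) && (0 < y)) -> Gfun mu sigma p u x y = 0.
Proof. by move=> h; rewrite /Gfun (negbTE h). Qed.

Lemma sum_ind (R : realType) (I : finType) (A : pred I) (c : R) (F : I -> R) :
  \sum_i (if A i then c else 0) * F i = c * \sum_(i | A i) F i.
Proof.
rewrite [in RHS]big_mkcond mulr_sumr; apply: eq_bigr => i _.
by case: (A i); rewrite ?mul0r ?mulr0.
Qed.

Lemma class_tight (P U : finType) (theta : P -> U -> bool) d0 p u :
  theta p u -> theta_relb theta d0 (inl p) = theta_relb theta d0 (inr u).
Proof.
move=> hpu; apply: asbool_equiv_eq; split => -[a [s [hall [hpath [hin hlast]]]]];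
  exists a, (rcons s (p, u)); split.
- by rewrite -rcons_cons all_rcons hall /= hpu.
- split; first rewrite rcons_path hpath /=.
    move: hlast; rewrite /in_pair /chain_step => /orP[/eqP [<-]|/eqP //].
    by rewrite eqxx.
  by split => //; rewrite last_rcons /in_pair eqxx orbT.
- by rewrite -rcons_cons all_rcons hall /= hpu.
- split; first rewrite rcons_path hpath /=.
    move: hlast; rewrite /in_pair /chain_step => /orP[/eqP //|/eqP [<-]].
    by rewrite eqxx orbT.
  by split => //; rewrite last_rcons /in_pair eqxx.
Qed.

Lemma key (R : realType) (P U : finType) (mu sigma : P + U -> R)
  (hsigma : forall d, 0 < sigma d) (psi : P + U -> R) (z : R)
  (hopt : optimal mu sigma psi) (hz : 0 < z) (hpos : forall d, 0 < psi d)
  (p0 : P) (u0 : U)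
  (hz0 : Gfun mu sigma p0 u0 (psi (inl p0)) (psi (inr u0)) = z)
  (hzmin : forall p u, z <= Gfun mu sigma p u (psi (inl p)) (psi (inr u)))
  (e : P + U -> R) (he : forall d, `|e d| <= 1)
  (ht : forall p u, Gfun mu sigma p u (psi (inl p)) (psi (inr u)) = z ->
          e (inl p) + e (inr u) <= 0) :
  \sum_d e d * (psi d / sigma d) ^+ 2 <= 0.
Proof.
rewrite leNgt; apply/negP => hs.
set s := \sum_d _ in hs.
pose w d := sigma d ^+ 2 / psi d.
have hw d : 0 < w d by rewrite /w divr_gt0 ?exprn_gt0.
pose K := \sum_d 2 * sigma d ^+ 2 / w d ^+ 3.
have hK : 0 <= K.
  by apply: sumr_ge0 => d _; apply: ltW; rewrite divr_gt0 ?mulr_gt0 ?exprn_gt0 ?invr_gt0.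
pose D2 p u := (mu (inl p) - mu (inr u)) ^+ 2.
have hG p u : Gfun mu sigma p u (psi (inl p)) (psi (inr u)) =
   D2 p u / (w (inl p) + w (inr u)) by rewrite GfunE.
have hWpos p u : 0 < w (inl p) + w (inr u) by rewrite addr_gt0.
have hslack p u : Gfun mu sigma p u (psi (inl p)) (psi (inr u)) != z ->
   z * (w (inl p) + w (inr u)) < D2 p u.
  move=> hne; have : z < Gfun mu sigma p u (psi (inl p)) (psi (inr u)).
    by rewrite lt_neqAle eq_sym hne hzmin.
  by rewrite hG ltr_pdivlMr // mulrC.
pose f (i : option ((P + U) + (P * U))) : R :=
  match i with
  | None => s / (K + 1)
  | Some (inl d) => w d / 2
  | Some (inr pu) =>
     if Gfun mu sigma pu.1 pu.2 (psi (inl pu.1)) (psi (inr pu.2)) == z then 1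
     else (D2 pu.1 pu.2 - z * (w (inl pu.1) + w (inr pu.2))) / (2 * z)
  end.
have hf i : 0 < f i.
  case: i => [[d|[p u]]|] /=.
  - by rewrite divr_gt0.
  - case: ifP => [_|/negbT hne]; first by [].
    rewrite divr_gt0 ?mulr_gt0 // subr_gt0; exact: hslack.
  - by rewrite divr_gt0 // ltr_wpDl.
have [t ht0 htf] := @exists_small _ _ _ hf.
have htw d : t <= w d / 2 := htf (Some (inl d)).
have hts : t * (K + 1) <= s.
  by have := htf None; rewrite /= ler_pdivlMr // ltr_wpDl.
have htp p u : Gfun mu sigma p u (psi (inl p)) (psi (inr u)) != z ->
   t * (2 * z) <= D2 p u - z * (w (inl p) + w (inr u)).
  move=> hne; have := htf (Some (inr (p, u))); rewrite /= (negbTE hne).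
  by rewrite ler_pdivlMr ?mulr_gt0.
have he1 d : - 1 <= e d /\ e d <= 1 by move: (he d); rewrite ler_norml => /andP[].
have hte d : `|t * e d| <= t.
  by rewrite normrM (ger0_norm (ltW ht0)) ler_piMr ?(ltW ht0) // -ler_norml he.
pose wp d := w d + t * e d.
have hwp d : 0 < wp d.
  have := hte d; rewrite ler_norml => /andP[h1 h2].
  have := htw d; have := hw d; rewrite /wp; lra.
pose phi d := sigma d ^+ 2 / wp d.
have hphi d : 0 < phi d by rewrite divr_gt0 ?exprn_gt0.
pose S := \sum_d phi d.
have hS1 : S < 1.
  have hle : S <= \sum_d (psi d - (t * e d) * (psi d / sigma d) ^+ 2 +
                          t ^+ 2 * (2 * sigma d ^+ 2 / w d ^+ 3)).
    apply: ler_sum => d _.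
    have := @per_term _ _ _ _ _ (exprn_gt0 2 (hsigma d)) (hw d) (hte d) (htw d).
    have -> : sigma d ^+ 2 / w d = psi d.
      by rewrite /w; field; rewrite !gt_eqF.
    have -> : sigma d ^+ 2 / w d ^+ 2 = (psi d / sigma d) ^+ 2.
      by rewrite /w; field; rewrite !gt_eqF.
    by [].
  apply: (le_lt_trans hle).
  rewrite big_split /= sumrB -mulr_sumr.
  have -> : \sum_d (t * e d) * (psi d / sigma d) ^+ 2 = t * s.
    by rewrite /s mulr_sumr; apply: eq_bigr => d _; rewrite [RHS]mulrA.
  have -> : \sum_d psi d = 1 by case: hopt => -[].
  rewrite -/K.
  have : t * t * (K + 1) <= t * s by rewrite -mulrA ler_pM2l.
  nra.
have hS0 : 0 < S.
  rewrite lt_neqAle sumr_ge0 ?andbT; last by move=> d _; exact: ltW.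
  apply/negP => /eqP /esym hS.
  have := psumr_eq0P (P := predT) (fun d _ => ltW (hphi d)) hS (i := inl p0) isT.
  by move/eqP; rewrite gt_eqF.
pose psi' d := phi d / S.
have hfeas : feasible psi'.
  split; first by move=> d; apply: ltW; rewrite divr_gt0.
  by rewrite /psi' -mulr_suml -/S divff // gt_eqF.
have [p [u Hpu]] := hopt.2 psi' hfeas.
have := Hpu p0 u0; rewrite hz0.
have hpsi' d : 0 < psi' d by rewrite divr_gt0.
rewrite GfunE //.
have hq d : sigma d ^+ 2 / psi' d = S * wp d.
  by rewrite /psi' /phi; field; rewrite !gt_eqF // ?hwp ?hS0 ?hsigma.
rewrite !hq -mulrDr -/(D2 p u).
have hpair : z * (wp (inl p) + wp (inr u)) <= D2 p u.
  have e1 := he1 (inl p); have e2 := he1 (inr u).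
  rewrite /wp.
  have [hq0|hne] := eqVneq (Gfun mu sigma p u (psi (inl p)) (psi (inr u))) z.
    have hsum := ht _ _ hq0.
    move: hq0; rewrite hG => hq0.
    have hD : D2 p u = z * (w (inl p) + w (inr u)) by rewrite -hq0 divfK ?gt_eqF.
    rewrite hD.
    have : z * t * (e (inl p) + e (inr u)) <= 0.
      by rewrite pmulr_rle0 ?mulr_gt0.
    lra.
  have := htp _ _ hne.
  have : z * t * (e (inl p) + e (inr u)) <= z * t * 2.
    by rewrite ler_pM2l ?mulr_gt0 //; lra.
  lra.
have hWp : 0 < wp (inl p) + wp (inr u) by rewrite addr_gt0.
rewrite ler_pdivrMr ?mulr_gt0 // => hc.
have : z * (wp (inl p) + wp (inr u)) * S < z * (wp (inl p) + wp (inr u)).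
  by rewrite gtr_pMr ?mulr_gt0.
nra.
Qed.

Theorem proposition6 (R : realType) (P U : finType)
  (mu sigma : P + U -> R)
  (hsigma : forall d, 0 < sigma d)
  (hmu_inj : injective mu)
  (hmu_sep : forall (p : P) (u : U), mu (inr u) < mu (inl p))
  (psi : P + U -> R) :
  optimal mu sigma psi ->
  exists z : R, 0 < z /\
  exists theta : P -> U -> bool,
    ((forall u : U, exists p : P, theta p u) /\
     (forall p : P, exists u : U, theta p u)) /\
    (forall d0 : P + U,
       \sum_(p : P | theta_relb theta d0 (inl p))
          (psi (inl p) / sigma (inl p)) ^+ 2
       = \sum_(u : U | theta_relb theta d0 (inr u))
          (psi (inr u) / sigma (inr u)) ^+ 2) /\
    (forall (p : P) (u : U),
       z <= Gfun mu sigma p u (psi (inl p)) (psi (inr u)) /\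
       (Gfun mu sigma p u (psi (inl p)) (psi (inr u)) = z <-> theta p u)).
Proof.
move=> hopt.
have [p0 [u0 hmin]] := hopt.2 psi hopt.1.
set z := Gfun mu sigma p0 u0 (psi (inl p0)) (psi (inr u0)).
have hz : 0 < z.
  pose n : R := #|{: P + U}|%:R.
  have hn : 0 < n.
    by rewrite /n ltr0n; apply/card_gt0P; exists (inl p0).
  pose phi : P + U -> R := fun _ => n^-1.
  have hfe : feasible phi.
    split; first by move=> d; rewrite invr_ge0 ltW.
    by rewrite sumr_const -/n -[_ *+ _]mulr_natr mulVf ?gt_eqF.
  have [p [u Hpu]] := hopt.2 phi hfe.
  apply: (lt_le_trans _ (Hpu p0 u0)).
  rewrite GfunE ?invr_gt0 // divr_gt0 ?exprn_gt0 ?subr_gt0 ?hmu_sep //.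
  by rewrite addr_gt0 // divr_gt0 ?exprn_gt0 ?invr_gt0.
have hpos : forall d, 0 < psi d.
  case=> [p|u].
    have [//|h] := boolP (0 < psi (inl p)).
    have := hmin p u0; rewrite (@Gfun0 R P U mu sigma p u0) ?negb_and ?h // => hle.
    have hz0 : z <= 0 := hle; exfalso; lra.
  have [//|h] := boolP (0 < psi (inr u)).
  have := hmin p0 u; rewrite (@Gfun0 R P U mu sigma p0 u) ?negb_and ?h ?orbT // => hle.
  have hz0 : z <= 0 := hle; exfalso; lra.
have hkey := @key R P U mu sigma hsigma psi z hopt hz hpos p0 u0 erefl hmin.
exists z; split => //.
exists (fun p u => Gfun mu sigma p u (psi (inl p)) (psi (inr u)) == z).
split; [split|split].
- move=> u; have [//|hno] := pselect (exists p, Gfun mu sigma p u (psi (inl p)) (psi (inr u)) == z).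
  exfalso.
  have := hkey (fun d : P + U => (if d == inr u then 1 else 0 : R)).
  have H1 : forall d : P + U, `|(if d == inr u then 1 else 0 : R)| <= 1.
    by move=> d; case: (d == _); rewrite ?normr1 ?normr0.
  move=> /(_ H1).
  have H2 : forall (p : P) (u' : U), Gfun mu sigma p u' (psi (inl p)) (psi (inr u')) = z ->
      (if (inl p : P + U) == inr u then 1 else 0 : R) + (if (inr u' : P + U) == inr u then 1 else 0) <= 0.
    move=> p u' hq.
    have -> : (inl p == inr u :> P + U) = false by [].
    have [[e]|hne] := eqVneq (inr u' : P + U) (inr u); last by rewrite add0r.
    by exfalso; apply: hno; exists p; rewrite -e hq.
  move=> /(_ H2).
  rewrite (bigD1 (inr u)) //= eqxx mul1r big1 ?addr0.
    by apply/negP; rewrite -ltNge exprn_gt0 // divr_gt0.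
  by move=> d /negbTE ->; rewrite mul0r.
- move=> p; have [//|hno] := pselect (exists u, Gfun mu sigma p u (psi (inl p)) (psi (inr u)) == z).
  exfalso.
  have := hkey (fun d : P + U => (if d == inl p then 1 else 0 : R)).
  have H1 : forall d : P + U, `|(if d == inl p then 1 else 0 : R)| <= 1.
    by move=> d; case: (d == _); rewrite ?normr1 ?normr0.
  move=> /(_ H1).
  have H2 : forall (p' : P) (u : U), Gfun mu sigma p' u (psi (inl p')) (psi (inr u)) = z ->
      (if (inl p' : P + U) == inl p then 1 else 0 : R) + (if (inr u : P + U) == inl p then 1 else 0) <= 0.
    move=> p' u hq.
    have -> : (inr u == inl p :> P + U) = false by [].
    have [[e]|hne] := eqVneq (inl p' : P + U) (inl p); last by rewrite add0r.
    by exfalso; apply: hno; exists u; rewrite -e hq.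
  move=> /(_ H2).
  rewrite (bigD1 (inl p)) //= eqxx mul1r big1 ?addr0.
    by apply/negP; rewrite -ltNge exprn_gt0 // divr_gt0.
  by move=> d /negbTE ->; rewrite mul0r.
- move=> d0.
  set theta := (fun p u => _ == z).
  pose A p := theta_relb theta d0 (inl p).
  pose B u := theta_relb theta d0 (inr u).
  pose ec (c : R) (d : P + U) : R := match d with
    | inl p => if A p then - c else 0
    | inr u => if B u then c else 0 end.
  have hec c : `|c| <= 1 -> forall d, `|ec c d| <= 1.
    move=> hc [p|u] /=; [case: (A p)|case: (B u)]; rewrite ?normrN ?normr0 //.
  have htc c : forall p u, Gfun mu sigma p u (psi (inl p)) (psi (inr u)) = z ->
      ec c (inl p) + ec c (inr u) <= 0.
    move=> p u hq /=; rewrite /A /B (@class_tight P U theta d0 p u); last by rewrite /theta hq.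
    by case: (theta_relb _ _ _); rewrite ?addNr ?addr0.
  have hsum c : \sum_d ec c d * (psi d / sigma d) ^+ 2 =
      - c * \sum_(p | A p) (psi (inl p) / sigma (inl p)) ^+ 2 +
        c * \sum_(u | B u) (psi (inr u) / sigma (inr u)) ^+ 2.
    rewrite big_sumType /=.
    by rewrite (@sum_ind R P A (- c) (fun p => (psi (inl p) / sigma (inl p)) ^+ 2))
               (@sum_ind R U B c (fun u => (psi (inr u) / sigma (inr u)) ^+ 2)).
  have hn1 : `|(1 : R)| <= 1 by rewrite normr1.
  have hn2 : `|(-1 : R)| <= 1 by rewrite normrN normr1.
  have h1 := hkey (ec 1) (hec 1 hn1) (htc 1).
  have h2 := hkey (ec (-1)) (hec (-1) hn2) (htc (-1)).
  rewrite hsum in h1; rewrite hsum in h2.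
  rewrite -/(A _) -/(B _).
  change (\sum_(p | A p) (psi (inl p) / sigma (inl p)) ^+ 2 =
          \sum_(u | B u) (psi (inr u) / sigma (inr u)) ^+ 2).
  lra.
- move=> p u; split; first exact: hmin.
  by split => [->|/eqP].
Qed.
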